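(* Let $K\subseteq \mathbb{R}^k$ be compact and let $f:\mathbb{R}^k\to\mathbb{R}$ be $f(x)=d(x,K)$. Let $\epsilon\geq 0$ and $\delta>0$ be such that $2\delta+\epsilon<1$. Let $x\in\mathbb{R}^k$ and $r$ with $0<r<d(x,K)$, and suppose there are $z_1,z_2\in K$ with $d(x,z_1)\leq d(x,K)+\epsilon r$ and $d(x,z_2)\leq d(x,K)+\epsilon r$. Suppose that $f$ is $\delta$-coarsely differentiable on $B(x,r)$. Let $\theta$ be the angle between $[x,z_1]$ and $[x,z_2]$. Then $$|\theta|\leq \cos^{-1}\left(2\left(\frac{1-(2\delta+\epsilon)}{1+2\delta}\right)^2-1\right).$$
   Context: $d(p,q)=|p-q|$ is the Euclidean distance, $d(p,K)=\inf\{d(p,x):x\in K\}$, and $B(x,r)$ is the closed Euclidean ball of radius $r$ centered at $x$. A function $f:\mathbb{R}^k\to\mathbb{R}$ is $\delta$-coarsely differentiable on $B(x,r)$ if there is an affine function $\lambda:\mathbb{R}^k\to\mathbb{R}$ such that $|f(p)-\lambda(p)|\leq \delta r$ for all $p\in B(x,r)$. *)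

(* Defs.v *)
From HB Require Import structures.
From mathcomp Require Import all_boot all_order all_algebra.
From mathcomp Require Import all_classical all_reals all_analysis.
Set Implicit Arguments. Unset Strict Implicit. Unset Printing Implicit Defensive.
Import Order.TTheory GRing.Theory Num.Theory numFieldNormedType.Exports.
Local Open Scope ring_scope.
Local Open Scope classical_set_scope.

(* Euclidean inner product and norm on R^k (the library norm on 'rV is the sup norm). *)
Definition dotp {R : realType} {k : nat} (p q : 'rV[R]_k) : R :=
  \sum_(i < k) p ord0 i * q ord0 i.

Definition euclid_norm {R : realType} {k : nat} (p : 'rV[R]_k) : R :=
  Num.sqrt (dotp p p).

Definition euclid_dist {R : realType} {k : nat} (p q : 'rV[R]_k) : R := euclid_norm (p - q).

Definition dist_to_set {R : realType} {k : nat} (p : 'rV[R]_k) (K : set 'rV[R]_k) : R :=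
  inf [set euclid_dist p y | y in K].

Definition closed_eball {R : realType} {k : nat} (x : 'rV[R]_k) (r : R) : set 'rV[R]_k :=
  [set p | euclid_dist p x <= r].

Definition affine {R : realType} {k : nat} (lam : 'rV[R]_k -> R) : Prop :=
  exists (a : 'rV[R]_k) (b : R), forall p, lam p = dotp a p + b.

Definition coarsely_diff {R : realType} {k : nat} (delta : R)
    (f : 'rV[R]_k -> R) (x : 'rV[R]_k) (r : R) : Prop :=
  exists lam : 'rV[R]_k -> R, affine lam /\
    forall p, closed_eball x r p -> `|f p - lam p| <= delta * r.

Definition vangle {R : realType} {k : nat} (u v : 'rV[R]_k) : R :=
  acos (dotp u v / (euclid_norm u * euclid_norm v)).

(* Main.v *)
Require Import Defs.
From HB Require Import structures.
From mathcomp Require Import all_boot all_order all_algebra.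
From mathcomp Require Import all_classical all_reals all_analysis.
From mathcomp Require Import ring lra.
Import Order.TTheory GRing.Theory Num.Theory numFieldNormedType.Exports.
Local Open Scope ring_scope.
Local Open Scope classical_set_scope.
Section S.
Variables (R : realType) (k : nat).
Implicit Types (p q w : 'rV[R]_k) (t : R).

Lemma dotpDl p q w : dotp (p + q) w = dotp p w + dotp q w.
Proof. by rewrite /dotp -big_split; apply: eq_bigr => i _; rewrite mxE mulrDl. Qed.
Lemma dotpC p q : dotp p q = dotp q p.
Proof. by apply: eq_bigr => i _; rewrite mulrC. Qed.
Lemma dotpDr p q w : dotp w (p + q) = dotp w p + dotp w q.
Proof. by rewrite dotpC dotpDl !(dotpC w). Qed.
Lemma dotpZl t p q : dotp (t *: p) q = t * dotp p q.
Proof. by rewrite /dotp mulr_sumr; apply: eq_bigr => i _; rewrite mxE mulrA. Qed.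
Lemma dotpZr t p q : dotp q (t *: p) = t * dotp q p.
Proof. by rewrite dotpC dotpZl dotpC. Qed.
Lemma dotpNl p q : dotp (- p) q = - dotp p q.
Proof. by rewrite -scaleN1r dotpZl mulN1r. Qed.
Lemma dotpNr p q : dotp q (- p) = - dotp q p.
Proof. by rewrite dotpC dotpNl dotpC. Qed.
Lemma dotpBl p q w : dotp (p - q) w = dotp p w - dotp q w.
Proof. by rewrite dotpDl dotpNl. Qed.
Lemma dotpBr p q w : dotp w (p - q) = dotp w p - dotp w q.
Proof. by rewrite dotpDr dotpNr. Qed.
Lemma dotp_ge0 p : 0 <= dotp p p.
Proof. by apply: sumr_ge0 => i _; rewrite -expr2 sqr_ge0. Qed.

Lemma CS p q : dotp p q ^+ 2 <= dotp p p * dotp q q.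
Proof.
set A := dotp p p; set B := dotp q q; set C := dotp p q.
have h1 := dotp_ge0 (B *: p - C *: q).
have h2 := dotp_ge0 (C *: p - A *: q).
have h3 := dotp_ge0 (p - q).
have h4 := dotp_ge0 (p + q).
have hA := dotp_ge0 p; have hB := dotp_ge0 q.
move: h1 h2 h3 h4.
rewrite !(dotpBl, dotpBr, dotpDl, dotpDr, dotpZl, dotpZr) -/A -/B (dotpC q p) -/C.
move=> h1 h2 h3 h4.
have e1 : 0 <= B * (A * B - C ^+ 2) by nra.
have e2 : 0 <= A * (A * B - C ^+ 2) by nra.
rewrite leNgt; apply/negP => hlt.
have hB0 : B <= 0 by nra.
have hA0 : A <= 0 by nra.
nra.
Qed.

Lemma enorm_ge0 p : 0 <= euclid_norm p.
Proof. exact: sqrtr_ge0. Qed.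
Lemma enorm_sqr p : euclid_norm p ^+ 2 = dotp p p.
Proof. by rewrite sqr_sqrtr // dotp_ge0. Qed.
Lemma enormZ t p : euclid_norm (t *: p) = `|t| * euclid_norm p.
Proof. by rewrite /euclid_norm dotpZl dotpZr mulrA -expr2 sqrtrM ?sqr_ge0 // sqrtr_sqr. Qed.
Lemma enormN p : euclid_norm (- p) = euclid_norm p.
Proof. by rewrite /euclid_norm dotpNl dotpNr opprK. Qed.
Lemma enormB p q : euclid_norm (p - q) = euclid_norm (q - p).
Proof. by rewrite -enormN opprB. Qed.
Lemma dotp_le p q : dotp p q <= euclid_norm p * euclid_norm q.
Proof.
have := CS p q; rewrite -!enorm_sqr -exprMn => h.
have hn : 0 <= euclid_norm p * euclid_norm q by rewrite mulr_ge0 ?enorm_ge0.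
rewrite -(ger0_norm hn); apply: le_trans (ler_norm _) _.
by rewrite -ler_sqr ?normr_ge0 // !real_normK ?num_real.
Qed.
Lemma enormD p q : euclid_norm (p + q) <= euclid_norm p + euclid_norm q.
Proof.
rewrite -ler_sqr ?nnegrE ?addr_ge0 ?enorm_ge0 //.
rewrite enorm_sqr dotpDl !dotpDr (dotpC q p) -!enorm_sqr.
have := dotp_le p q; nra.
Qed.
End S.

Section D.
Variables (R : realType) (k : nat) (K : set 'rV[R]_k) (z0 : 'rV[R]_k).
Hypothesis Kz0 : K z0.

Lemma dset_le p y : K y -> dist_to_set p K <= euclid_dist p y.
Proof.
move=> Ky; have := @ge_inf R [set euclid_dist p y | y in K].
apply => //; first by exists 0 => _ [w _ <-]; exact: enorm_ge0.
by exists y.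
Qed.

Lemma dist_lip p q : dist_to_set p K <= euclid_dist p q + dist_to_set q K.
Proof.
rewrite -lerBlDl; apply: lb_le_inf; first by exists (euclid_dist q z0), z0.
move=> _ [y Ky <-]; rewrite lerBlDl. apply: le_trans (dset_le p y Ky) _.
rewrite /euclid_dist (_ : p - y = (p - q) + (q - y)); last by rewrite addrA subrK.
exact: enormD.
Qed.
End D.

Lemma acos_mono (R : realType) (q t : R) : -1 <= t -> t <= q -> q <= 1 -> acos t >= acos q.
Proof.
move=> h1 h2 h3.
have iq : q \in `[(-1), 1]%R by rewrite in_itv /= h3 (le_trans h1 h2).
have it : t \in `[(-1), 1]%R by rewrite in_itv /= h1 (le_trans h2 h3).
rewrite leNgt; apply/negP => h.
have aq : acos q \in `[0, pi]%R by rewrite in_itv /= acos_ge0 ?acos_lepi //; move: iq; rewrite in_itv.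
have at' : acos t \in `[0, pi]%R by rewrite in_itv /= acos_ge0 ?acos_lepi //; move: it; rewrite in_itv.
have := ltr_cos at' aq; rewrite h !acosK //.
by rewrite ltNge h2.
Qed.

Theorem theorem3p1 (R : realType) (k : nat) (K : set 'rV[R]_k)
  (eps delta : R) (x z1 z2 : 'rV[R]_k) (r : R) :
  compact K ->
  0 <= eps -> 0 < delta -> 2 * delta + eps < 1 ->
  0 < r -> r < dist_to_set x K ->
  K z1 -> K z2 ->
  euclid_dist x z1 <= dist_to_set x K + eps * r ->
  euclid_dist x z2 <= dist_to_set x K + eps * r ->
  coarsely_diff delta (fun p => dist_to_set p K) x r ->
  `| vangle (z1 - x) (z2 - x) | <=
    acos (2 * ((1 - (2 * delta + eps)) / (1 + 2 * delta)) ^+ 2 - 1).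
Proof.
move=> _ he hd hde hr hrD Kz1 Kz2 hz1 hz2 [lam [[a [b hlam]] hball]].
set D := dist_to_set x K in hrD hz1 hz2.
have hx : closed_eball x r x by rewrite /closed_eball /euclid_dist /= subrr /euclid_norm /dotp big1 ?sqrtr0 ?ltW // => i _; rewrite mxE mul0r.
have hbx := hball x hx; rewrite hlam -/D in hbx.
have key : forall z, K z -> euclid_dist x z <= D + eps * r ->
   exists u, [/\ dotp u u = 1, euclid_norm u = 1, z - x = euclid_dist x z *: u,
     0 < euclid_dist x z & dotp a u <= eps - 1 + 2 * delta].
  move=> z Kz hz.
  set L := euclid_dist x z.
  have hL : D <= L by exact: (@dset_le _ _ K x z Kz).
  have L0 : 0 < L by lra.
  exists (L^-1 *: (z - x)).
  have uu : dotp (L^-1 *: (z - x)) (L^-1 *: (z - x)) = 1.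
    rewrite dotpZl dotpZr -enorm_sqr enormB -/(euclid_dist x z) -/L; field; lra.
  have un : euclid_norm (L^-1 *: (z - x)) = 1 by rewrite /euclid_norm uu sqrtr1.
  split => //; first by rewrite scalerA divff ?scale1r //; lra.
  set u := L^-1 *: (z - x) in uu un *.
  have hp : closed_eball x r (x + r *: u).
    by rewrite /closed_eball /euclid_dist /= (addrC x) addrK enormZ un mulr1 ger0_norm // (ltW hr).
  have hbp := hball _ hp; rewrite hlam dotpDr dotpZr in hbp.
  have fp : dist_to_set (x + r *: u) K <= L - r.
    apply: le_trans (@dset_le _ _ K _ _ Kz) _.
    rewrite /euclid_dist (_ : x + r *: u - z = (1 - r / L) *: (x - z)); last first.
      by apply/rowP => j; rewrite /u !mxE; field; lra.
    rewrite enormZ ger0_norm; last by rewrite subr_ge0 ler_pdivrMr // mul1r; lra.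
    by rewrite -/(euclid_dist x z) -/L mulrBl mul1r divfK ?gt_eqF.
  move: hbx hbp; rewrite !ler_norml => /andP[b1 b2] /andP[b3 b4].
  have h1 : r * dotp a u <= eps * r - r + 2 * (delta * r).
    move: b1 b2 b3 b4 fp hz hL; rewrite -/L; clearbody u L D; generalize (dotp a u) (dotp a x) (dist_to_set (x + r *: u) K) => ? ? ? *; lra.
  have : r * dotp a u <= r * (eps - 1 + 2 * delta).
    by apply: le_trans h1 _; rewrite le_eqVlt; apply/orP; left; apply/eqP; ring.
  by rewrite ler_pM2l.
have [u1 [uu1 un1 e1 L1 d1]] := key z1 Kz1 hz1.
have [u2 [uu2 un2 e2 L2 d2]] := key z2 Kz2 hz2.
set s := u1 + u2.
set m := 1 - (2 * delta + eps).
have m0 : 0 < m by rewrite /m; lra.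
have das : dotp a s <= - 2 * m by rewrite /s dotpDr /m; lra.
have ss : dotp s s = 2 + 2 * dotp u1 u2 by rewrite /s !(dotpDl, dotpDr) uu1 uu2 (@dotpC _ _ u2 u1); ring.
have NS0 : 0 < euclid_norm s.
  rewrite lt_neqAle enorm_ge0 andbT; apply/negP => /eqP h0.
  have := @CS _ _ a s; rewrite -(@enorm_sqr _ _ s) -h0 expr0n /= mulr0 => h.
  have : dotp a s ^+ 2 <= 0 by [].
  nra.
set NS := euclid_norm s in NS0.
have hp3 : closed_eball x r (x - (r / NS) *: s).
  rewrite /closed_eball /euclid_dist /= addrAC subrr add0r enormN enormZ -/NS ger0_norm; last by rewrite divr_ge0 ?ltW.
  by rewrite divfK ?gt_eqF.
have hbp := hball _ hp3; rewrite hlam dotpBr dotpZr in hbp.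
have fp3 : dist_to_set (x - (r / NS) *: s) K <= r + D.
  apply: le_trans (@dist_lip _ _ K z1 Kz1 _ x) _; rewrite /closed_eball /= -/D in hp3 *; lra.
move: hbx hbp; rewrite !ler_norml => /andP[b1 b2] /andP[b3 b4].
have h5 : (r / NS) * (2 * m) <= r * (1 + 2 * delta).
  have : 0 < r / NS by rewrite divr_gt0.
  nra.
have h6 : 2 * m <= NS * (1 + 2 * delta).
  have h5' : r * (2 * m) <= r * (NS * (1 + 2 * delta)).
    have := ler_wpM2r (ltW NS0) h5; rewrite mulrAC divfK ?gt_eqF // => h.
    by apply: le_trans h _; rewrite le_eqVlt; apply/orP; left; apply/eqP; ring.
  by rewrite ler_pM2l in h5'.
have h7 : 4 * m ^+ 2 <= (2 + 2 * dotp u1 u2) * (1 + 2 * delta) ^+ 2.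
  rewrite -ss -enorm_sqr -/NS.
  have : 0 <= 2 * m by lra.
  nra.
set c := m / (1 + 2 * delta).
have ce : c * (1 + 2 * delta) = m by rewrite /c divfK //; lra.
have hq : 2 * c ^+ 2 - 1 <= dotp u1 u2.
  have e0 : 0 < (1 + 2 * delta) ^+ 2 by apply: exprn_gt0; lra.
  rewrite -subr_ge0; rewrite -(pmulr_rge0 _ e0).
  have : 4 * (c * (1 + 2 * delta)) ^+ 2 <= (2 + 2 * dotp u1 u2) * (1 + 2 * delta) ^+ 2 by rewrite ce.
  rewrite exprMn; nra.
have c0 : 0 < c by rewrite /c divr_gt0 //; lra.
have hq1 : dotp u1 u2 <= 1 by have := @dotp_le _ _ u1 u2; rewrite un1 un2 mulr1.
have qe : dotp (z1 - x) (z2 - x) / (euclid_norm (z1 - x) * euclid_norm (z2 - x)) = dotp u1 u2.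
  rewrite e1 e2 dotpZl dotpZr !enormZ un1 un2 !mulr1 !ger0_norm ?ltW //; field; apply/andP; split; rewrite gt_eqF //.
rewrite /vangle qe.
have hq0 : -1 <= dotp u1 u2 <= 1 by rewrite hq1 andbT; nra.
have ht0 : -1 <= 2 * c ^+ 2 - 1 <= 1.
  apply/andP; split; first nra.
  have : c <= 1.
    rewrite /c ler_pdivrMr; last lra.
    rewrite /m; lra.
  nra.
have := acos_ge0 hq0; have := acos_ge0 ht0.
have := @acos_mono R (dotp u1 u2) (2 * c ^+ 2 - 1).
move: hq0 => /andP[? ?] h *.
apply/andP; split; first lra.
apply: h => //; nra.
Qed.
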